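(* Let $\alpha=1$, $j\ne0$, and $$G(x)=p_0+p_1\cos(2\pi x)+q_1\sin(2\pi x),\qquad V(x)=v_0+v_1\cos(2\pi x)+w_1\sin(2\pi x),$$ with real coefficients, $p_0>0$, $p_1\ge0$. Then there is a unique $r\ge1$ with $$\left(1-\frac1r\right)\left((p_1+j^2r)^2+q_1^2\right)=v_1^2+w_1^2.$$ Define $$a_0=2r-1,\quad \overline{H}=\frac{j^2(2r-1)}{2}+v_0-p_0,\quad a_1=-\frac{2r\big(v_1(p_1+j^2r)+w_1q_1\big)}{(p_1+j^2r)^2+q_1^2},\quad b_1=-\frac{2r\big(w_1(p_1+j^2r)-v_1q_1\big)}{(p_1+j^2r)^2+q_1^2}.$$ Then, with $m(x)=\dfrac{1}{a_0+a_1\cos(2\pi x)+b_1\sin(2\pi x)}$, the pair $(m,\overline{H})$ is the unique solution of problem (P) (with $\alpha=1$).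
   Context: $\mathbb{T}=\mathbb{R}/\mathbb{Z}$. Problem (P): given $0<\alpha\le2$, $j\ne0$, $V,G\in C^2(\mathbb{T})$, find $(m,\overline{H})\in C(\mathbb{T})\times\mathbb{R}$ with $m>0$ on $\mathbb{T}$, $\int_{\mathbb{T}}m=1$, and $\frac{j^2}{2m(x)^\alpha}+V(x)=\int_{\mathbb{T}}G(x-y)m(y)\,dy+\overline{H}$ for all $x\in\mathbb{T}$. *)

(* Defs.v *)
From Stdlib Require Import Reals.
Open Scope R_scope.

(* A function on the torus T = R/Z, represented as a 1-periodic function R -> R. *)
Definition periodic1 (f : R -> R) : Prop := forall x, f (x + 1) = f x.

Definition cont_torus (f : R -> R) : Prop := continuity f /\ periodic1 f.

(* "int_T f = I": the Riemann integral of f over [0,1] exists and equals I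
   (RiemannInt is independent of the integrability proof). *)
Definition int_T_eq (f : R -> R) (I : R) : Prop :=
  exists pr : Riemann_integrable f 0 1, RiemannInt pr = I.

Definition solves_P (alpha j : R) (V G : R -> R) (m : R -> R) (Hbar : R) : Prop :=
  cont_torus m /\
  (forall x, 0 < m x) /\
  int_T_eq m 1 /\
  (forall x, int_T_eq (fun y => G (x - y) * m y)
                      (j ^ 2 / (2 * Rpower (m x) alpha) + V x - Hbar)).

(* Main.v *)
Require Import Defs.
From Stdlib Require Import Reals Lra Psatz.
From Coquelicot Require Import Coquelicot.
Open Scope R_scope.

Lemma RI_plus (f g : R -> R) (a b A B : R) : is_RInt f a b A -> is_RInt g a b B ->
  is_RInt (fun x => f x + g x) a b (A + B).
Proof. intros; now apply (is_RInt_plus f g). Qed.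
Lemma RI_scal (k : R) (f : R -> R) (a b A : R) : is_RInt f a b A -> is_RInt (fun x => k * f x) a b (k * A).
Proof. intros; now apply (is_RInt_scal f). Qed.
Lemma RI_ext (f g : R -> R) (a b A : R) : (forall x, f x = g x) -> is_RInt f a b A -> is_RInt g a b A.
Proof. intros H; apply is_RInt_ext; intros; auto. Qed.
Lemma RI_eqv (f : R -> R) (a b A B : R) : is_RInt f a b A -> A = B -> is_RInt f a b B.
Proof. intros H ->; auto. Qed.
Lemma RI_uniq (f : R -> R) (a b A B : R) : is_RInt f a b A -> is_RInt f a b B -> A = B.
Proof. intros H1 H2. rewrite <- (is_RInt_unique (V:=R_CompleteNormedModule) _ _ _ _ H1). now apply (is_RInt_unique (V:=R_CompleteNormedModule)). Qed.
Lemma RI_const (c : R) : is_RInt (fun _ => c) 0 1 c.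
Proof. eapply RI_eqv. apply is_RInt_const. unfold scal; simpl; unfold mult; simpl. ring. Qed.
Lemma RI_lin3 (f1 f2 f3 : R -> R) (A1 A2 A3 k1 k2 k3 : R) :
  is_RInt f1 0 1 A1 -> is_RInt f2 0 1 A2 -> is_RInt f3 0 1 A3 ->
  is_RInt (fun y => k1 * f1 y + k2 * f2 y + k3 * f3 y) 0 1 (k1*A1 + k2*A2 + k3*A3).
Proof. intros. apply RI_plus; [apply RI_plus|]; apply RI_scal; auto. Qed.

Lemma c_plus (f g : R -> R) (x : R) : continuous f x -> continuous g x -> continuous (fun y => f y + g y) x.
Proof. intros; now apply (continuous_plus f g). Qed.
Lemma c_mult (f g : R -> R) (x : R) : continuous f x -> continuous g x -> continuous (fun y => f y * g y) x.
Proof. intros; now apply (continuous_mult f g). Qed.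
Lemma c_minus (f g : R -> R) (x : R) : continuous f x -> continuous g x -> continuous (fun y => f y - g y) x.
Proof. intros; now apply (continuous_minus f g). Qed.
Lemma c_inv (f : R -> R) (x : R) : continuous f x -> f x <> 0 -> continuous (fun y => / f y) x.
Proof. intros; now apply continuous_Rinv_comp. Qed.
Lemma c_div (f g : R -> R) (x : R) : continuous f x -> continuous g x -> g x <> 0 -> continuous (fun y => f y / g y) x.
Proof. intros; unfold Rdiv; apply c_mult; auto; now apply c_inv. Qed.
Lemma c_cst (c x : R) : continuous (fun _ : R => c) x.
Proof. apply continuous_const. Qed.
Lemma c_cos (x : R) : continuous (fun y => cos (2*PI*y)) x.
Proof. apply (ex_derive_continuous (K:=R_AbsRing) (V:=R_NormedModule)); auto_derive; auto. Qed.
Lemma c_sin (x : R) : continuous (fun y => sin (2*PI*y)) x.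
Proof. apply (ex_derive_continuous (K:=R_AbsRing) (V:=R_NormedModule)); auto_derive; auto. Qed.
Lemma c_of (f : R -> R) (x : R) : continuity f -> continuous f x.
Proof. intros H; apply continuity_pt_filterlim; apply H. Qed.

Lemma ex_c (f : R -> R) : (forall x, continuous f x) -> ex_RInt f 0 1.
Proof. intros; apply (ex_RInt_continuous (V:=R_CompleteNormedModule)); auto. Qed.

Lemma intT_is (f : R -> R) (I : R) : int_T_eq f I -> is_RInt f 0 1 I.
Proof. intros [pr Hpr]. rewrite <- Hpr, <- RInt_Reals. apply (RInt_correct (V:=R_CompleteNormedModule)), ex_RInt_Reals_1; auto. Qed.
Lemma is_intT (f : R -> R) (I : R) : is_RInt f 0 1 I -> int_T_eq f I.
Proof. intros H. assert (He : ex_RInt f 0 1) by (exists I; auto).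
  exists (ex_RInt_Reals_0 _ _ _ He). rewrite <- RInt_Reals. now apply (is_RInt_unique (V:=R_CompleteNormedModule)). Qed.

Lemma PI_neq0' : PI <> 0. Proof. apply PI_neq0. Qed.

Definition Dn u v x := 1 + (u^2+v^2) - 2*(u*cos(2*PI*x) + v*sin(2*PI*x)).

Lemma cs1 x : cos x ^ 2 + sin x ^ 2 = 1.
Proof. rewrite <- (sin2_cos2 x). unfold Rsqr. ring. Qed.

Lemma w_bound u v c s : c^2 + s^2 = 1 -> (u*c+v*s)^2 + (u*s - v*c)^2 = u^2+v^2.
Proof. intros H. transitivity ((u^2+v^2)*(c^2+s^2)); [ring| rewrite H; ring]. Qed.

Lemma Dn_pos u v x : u^2+v^2 < 1 -> 0 < Dn u v x.
Proof. intros H. unfold Dn. pose proof (w_bound u v _ _ (cs1 (2*PI*x))).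
  set (c := cos (2*PI*x)) in *. set (s := sin (2*PI*x)) in *.
  set (w := u*c+v*s) in *. set (e := u^2+v^2) in *.
  assert (Hw : w^2 <= e) by (pose proof (pow2_ge_0 (u*s-v*c)); lra).
  destruct (Rle_or_lt (1 + e - 2*w) 0) as [Hc|Hc]; [|lra].
  exfalso. assert (Hw1 : (1-w)^2 <= 0) by nra. assert (w = 1) by nra. subst w. nra. Qed.

Lemma Dd_pos u v x : u^2+v^2 < 1 -> 0 < 1 - u*cos(2*PI*x) - v*sin(2*PI*x).
Proof. intros H. pose proof (w_bound u v _ _ (cs1 (2*PI*x))).
  set (c := cos (2*PI*x)) in *. set (s := sin (2*PI*x)) in *.
  assert (Hw : (u*c+v*s)^2 < 1) by (pose proof (pow2_ge_0 (u*s-v*c)); lra).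
  nra. Qed.

Lemma c_Dn u v x : continuous (fun y => Dn u v y) x.
Proof. unfold Dn. apply (ex_derive_continuous (K:=R_AbsRing) (V:=R_NormedModule)); auto_derive; auto. Qed.

Lemma cos2PI1 : cos (2*PI*1) = 1. Proof. rewrite Rmult_1_r; apply cos_2PI. Qed.
Lemma sin2PI1 : sin (2*PI*1) = 0. Proof. rewrite Rmult_1_r; apply sin_2PI. Qed.
Lemma cos2PI0 : cos (2*PI*0) = 1. Proof. rewrite Rmult_0_r; apply cos_0. Qed.
Lemma sin2PI0 : sin (2*PI*0) = 0. Proof. rewrite Rmult_0_r; apply sin_0. Qed.

Lemma FTC (F f : R -> R) : (forall x, is_derive F x (f x)) -> (forall x, continuous f x) ->
  is_RInt f 0 1 (F 1 - F 0).
Proof. intros H1 H2. apply (is_RInt_derive (V:=R_CompleteNormedModule) F f 0 1); auto. Qed.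

Lemma poisson1 u v : u^2+v^2 < 1 -> is_RInt (fun x => (1-(u^2+v^2))/Dn u v x) 0 1 1.
Proof.
  intros He.
  set (F := fun x => x + /PI * atan ((u*sin(2*PI*x) - v*cos(2*PI*x))/(1 - u*cos(2*PI*x) - v*sin(2*PI*x)))).
  assert (HF: forall x, is_derive F x ((1-(u^2+v^2))/Dn u v x)).
  { intros x. pose proof (Dd_pos u v x He) as H0. pose proof (Dn_pos u v x He) as H2.
    pose proof (w_bound u v _ _ (cs1 (2*PI*x))) as H1. pose proof PI_neq0 as HP.
    unfold F, Dn in *. auto_derive.
    - lra.
    - set (c := cos (2*PI*x)) in *. set (s := sin (2*PI*x)) in *.
      transitivity (1 + 2*((u*c+v*s) - ((u*c+v*s)^2 + (u*s-v*c)^2))/(1 - 2*(u*c+v*s) + ((u*c+v*s)^2 + (u*s-v*c)^2))).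
      + field. rewrite H1. split; [lra|split;[lra|auto]].
      + rewrite H1. field. lra. }
  eapply RI_eqv. apply (FTC F). exact HF.
  intros x. apply c_div. apply c_cst. apply c_Dn. pose proof (Dn_pos u v x He); lra.
  unfold F. rewrite cos2PI1, sin2PI1, cos2PI0, sin2PI0. ring.
Qed.

Lemma poisson_ln u v : u^2+v^2 < 1 ->
  is_RInt (fun x => 4*PI*(u*sin(2*PI*x) - v*cos(2*PI*x))/Dn u v x) 0 1 0.
Proof.
  intros He.
  eapply RI_eqv. apply (FTC (fun x => ln (Dn u v x))).
  - intros x. pose proof (Dn_pos u v x He) as H2. unfold Dn in *. auto_derive. lra. field. lra.
  - intros x. apply c_div. apply (ex_derive_continuous (K:=R_AbsRing) (V:=R_NormedModule)); auto_derive; auto.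
    apply c_Dn. pose proof (Dn_pos u v x He); lra.
  - unfold Dn. rewrite cos2PI1, sin2PI1, cos2PI0, sin2PI0. ring.
Qed.

Lemma int_cos : is_RInt (fun x => cos (2*PI*x)) 0 1 0.
Proof.
  eapply RI_eqv. apply (FTC (fun x => sin (2*PI*x) / (2*PI))).
  - intros x. pose proof PI_neq0. auto_derive. auto. field. auto.
  - intros; apply c_cos.
  - rewrite sin2PI1, sin2PI0. field. apply PI_neq0.
Qed.
Lemma int_sin : is_RInt (fun x => sin (2*PI*x)) 0 1 0.
Proof.
  eapply RI_eqv. apply (FTC (fun x => - cos (2*PI*x) / (2*PI))).
  - intros x. pose proof PI_neq0. auto_derive. auto. field. auto.
  - intros; apply c_sin.
  - rewrite cos2PI1, cos2PI0. field. apply PI_neq0.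
Qed.

Lemma poisson_cs u v : u^2+v^2<1 ->
  is_RInt (fun x => cos(2*PI*x) * ((1-(u^2+v^2))/Dn u v x)) 0 1 u /\
  is_RInt (fun x => sin(2*PI*x) * ((1-(u^2+v^2))/Dn u v x)) 0 1 v.
Proof.
  intros He. pose proof (poisson1 u v He) as H1. pose proof (poisson_ln u v He) as H2.
  assert (HD : forall x, Dn u v x <> 0) by (intro x; pose proof (Dn_pos u v x He); lra).
  set (e := u^2+v^2) in *.
  set (mt := fun x => (1-e)/Dn u v x) in *.
  assert (Hc: forall x, continuous mt x).
  { intros x; unfold mt; apply c_div; [apply c_cst|apply c_Dn|auto]. }
  destruct (ex_c (fun x => cos(2*PI*x) * mt x)) as [C HC].
  { intros x; apply c_mult; auto; apply c_cos. }
  destruct (ex_c (fun x => sin(2*PI*x) * mt x)) as [S HS].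
  { intros x; apply c_mult; auto; apply c_sin. }
  simpl in C, S.
  assert (R2 : u*S + (-v)*C = (1-e)/(4*PI) * 0).
  { apply (RI_uniq (fun x => u * (sin(2*PI*x)*mt x) + (-v) * (cos(2*PI*x)*mt x)) 0 1).
    - apply RI_plus; apply RI_scal; auto.
    - apply (RI_ext (fun x => ((1-e)/(4*PI)) * (4*PI*(u*sin (2*PI*x) - v*cos (2*PI*x))/Dn u v x))).
      + intros x; unfold mt; field; split; [auto|apply PI_neq0].
      + apply RI_scal, H2. }
  assert (R3 : (1+e)*1 + (-2*u)*C + (-2*v)*S = 1 - e).
  { apply (RI_uniq (fun x => (1+e) * mt x + (-2*u)*(cos(2*PI*x)*mt x) + (-2*v)*(sin(2*PI*x)*mt x)) 0 1).
    - apply RI_lin3; auto.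
    - apply (RI_ext (fun _ => 1-e)).
      + intros x; unfold mt. specialize (HD x). unfold Dn in *. fold e in HD |- *. field. auto.
      + apply RI_const. }
  assert (A1 : u*C + v*S - e = 0).
  { replace (u*C + v*S - e) with (-(1/2)*((1+e)*1 + (-2*u)*C + (-2*v)*S - (1-e))) by field.
    rewrite R3; ring. }
  assert (A2 : u*S - v*C = 0).
  { replace (u*S - v*C) with (u*S + (-v)*C) by ring. rewrite R2; ring. }
  assert (E1 : e*(C-u) = 0).
  { replace (e*(C-u)) with (u*(u*C+v*S - e) - v*(u*S-v*C)) by (unfold e; ring). rewrite A1, A2; ring. }
  assert (E2 : e*(S-v) = 0).
  { replace (e*(S-v)) with (v*(u*C+v*S - e) + u*(u*S-v*C)) by (unfold e; ring). rewrite A1, A2; ring. }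
  destruct (Req_dec e 0) as [He0|He0].
  - assert (Hu : u = 0) by (unfold e in He0; nra). assert (Hv : v = 0) by (unfold e in He0; nra).
    assert (Hm : forall x, mt x = 1).
    { intros x. unfold mt, Dn. fold e. rewrite He0, Hu, Hv. field. }
    split.
    + apply (RI_eqv _ 0 1 0); [|auto]. apply (RI_ext (fun x => cos (2*PI*x))). intros x; specialize (Hm x); unfold mt in Hm; rewrite Hm; ring. apply int_cos.
    + apply (RI_eqv _ 0 1 0); [|auto]. apply (RI_ext (fun x => sin (2*PI*x))). intros x; specialize (Hm x); unfold mt in Hm; rewrite Hm; ring. apply int_sin.
  - apply Rmult_integral in E1. apply Rmult_integral in E2.
    destruct E1 as [E1|E1]; [contradiction|]. destruct E2 as [E2|E2]; [contradiction|].
    split; [apply (RI_eqv _ 0 1 C); [exact HC|lra] | apply (RI_eqv _ 0 1 S); [exact HS|lra]].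
Qed.

Lemma RI_minus (f g : R -> R) (A B : R) : is_RInt f 0 1 A -> is_RInt g 0 1 B ->
  is_RInt (fun x => f x - g x) 0 1 (A - B).
Proof. intros H1 H2. eapply RI_eqv. eapply RI_ext; [|apply RI_plus; [exact H1| apply (RI_scal (-1)); exact H2]].
  intros; simpl; ring. ring. Qed.

Lemma conv_formula (G : R -> R) p0 p1 q1 (mm : R -> R) I C S x :
  (forall z, G z = p0 + p1*cos(2*PI*z) + q1*sin(2*PI*z)) ->
  is_RInt mm 0 1 I -> is_RInt (fun y => cos(2*PI*y)*mm y) 0 1 C ->
  is_RInt (fun y => sin(2*PI*y)*mm y) 0 1 S ->
  is_RInt (fun y => G (x-y) * mm y) 0 1
    (p0*I + (p1*cos(2*PI*x) + q1*sin(2*PI*x))*C + (p1*sin(2*PI*x) - q1*cos(2*PI*x))*S).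
Proof. intros HG H1 H2 H3. eapply RI_ext; [|apply RI_lin3; eauto]. intros y; simpl. rewrite HG.
  replace (2*PI*(x-y)) with (2*PI*x - 2*PI*y) by ring. rewrite cos_minus, sin_minus. ring. Qed.

Lemma sol_eq j p0 p1 q1 (G V m : R -> R) H : j <> 0 ->
  (forall z, G z = p0 + p1*cos(2*PI*z) + q1*sin(2*PI*z)) -> solves_P 1 j V G m H ->
  exists C S : R, is_RInt (fun y => cos(2*PI*y)*m y) 0 1 C /\ is_RInt (fun y => sin(2*PI*y)*m y) 0 1 S /\
   forall x, j^2/2 * / m x = p0 + (p1*cos(2*PI*x) + q1*sin(2*PI*x))*C + (p1*sin(2*PI*x) - q1*cos(2*PI*x))*S + H - V x.
Proof.
  intros Hj HG [[Hc Hper] [Hpos [Hint Heq]]].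
  destruct (ex_c (fun x => cos(2*PI*x) * m x)) as [C HC].
  { intros x; apply c_mult; [apply c_cos| apply c_of; auto]. }
  destruct (ex_c (fun x => sin(2*PI*x) * m x)) as [S HS].
  { intros x; apply c_mult; [apply c_sin| apply c_of; auto]. }
  exists C, S. split; [auto|split;[auto|]].
  intros x. pose proof (conv_formula G p0 p1 q1 m 1 C S x HG (intT_is _ _ Hint) HC HS) as H1.
  pose proof (RI_uniq _ _ _ _ _ H1 (intT_is _ _ (Heq x))) as H2.
  rewrite Rpower_1 in H2 by auto. specialize (Hpos x).
  replace (j^2/2 * / m x) with (j ^ 2 / (2 * m x)) by (field; lra). lra.
Qed.

Lemma sq_sum0 a b : a*a + b*b = 0 -> a = 0 /\ b = 0.
Proof. intros H. pose proof (Rle_0_sqr a). pose proof (Rle_0_sqr b). unfold Rsqr in *.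
  assert (a*a = 0) by lra. assert (b*b = 0) by lra.
  apply Rmult_integral in H2. apply Rmult_integral in H3.
  split; [destruct H2|destruct H3]; auto. Qed.

Lemma uniq_gen j p0 p1 q1 (G V m : R -> R) H (m' : R -> R) H' : j <> 0 -> 0 <= p1 ->
  (forall z, G z = p0 + p1*cos(2*PI*z) + q1*sin(2*PI*z)) ->
  solves_P 1 j V G m H -> solves_P 1 j V G m' H' -> (forall x, m' x = m x) /\ H' = H.
Proof.
  intros Hj Hp1 HG Hs Hs'.
  destruct (sol_eq j p0 p1 q1 G V m H Hj HG Hs) as (C & S & HC & HS & Hk).
  destruct (sol_eq j p0 p1 q1 G V m' H' Hj HG Hs') as (C' & S' & HC' & HS' & Hk').
  destruct Hs as [[Hc _] [Hpos [Hint _]]]. destruct Hs' as [[Hc' _] [Hpos' [Hint' _]]].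
  apply intT_is in Hint, Hint'.
  assert (Hj2 : 0 < j^2) by (apply pow2_gt_0; auto).
  assert (key : forall x, / m' x - / m x = (2/j^2)*((p1*cos(2*PI*x) + q1*sin(2*PI*x))*(C'-C)
                 + (p1*sin(2*PI*x) - q1*cos(2*PI*x))*(S'-S) + (H'-H))).
  { intros x. replace (/ m' x - / m x) with ((2/j^2)*(j^2/2 * / m' x - j^2/2 * / m x)) by (field; repeat split; auto; specialize (Hpos x); specialize (Hpos' x); lra).
    rewrite Hk, Hk'. ring. }
  assert (Cm : forall x, continuous m x) by (intros; apply c_of; auto).
  assert (Cm' : forall x, continuous m' x) by (intros; apply c_of; auto).
  assert (Imu : is_RInt (fun y => m' y - m y) 0 1 0).
  { eapply RI_eqv. apply RI_minus; eauto. ring. }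
  assert (Cmu : is_RInt (fun y => cos(2*PI*y) * (m' y - m y)) 0 1 (C'-C)).
  { eapply RI_ext; [|apply RI_minus; [exact HC'|exact HC]]. intros; simpl; ring. }
  assert (Smu : is_RInt (fun y => sin(2*PI*y) * (m' y - m y)) 0 1 (S'-S)).
  { eapply RI_ext; [|apply RI_minus; [exact HS'|exact HS]]. intros; simpl; ring. }
  set (g := fun y => (m' y - m y) * (m' y - m y) / (m' y * m y)).
  assert (Cg : forall x, continuous g x).
  { intros x; unfold g. apply c_div. apply c_mult; apply c_minus; auto. apply c_mult; auto.
    specialize (Hpos x); specialize (Hpos' x); nra. }
  assert (HQ : is_RInt g 0 1 (-(2/j^2)*(p1*((C'-C)*(C'-C) + (S'-S)*(S'-S))))).
  { eapply RI_eqv. eapply RI_ext; [| eapply (RI_lin3 _ _ _ _ _ _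
        (-(2/j^2)*(p1*(C'-C) - q1*(S'-S))) (-(2/j^2)*(q1*(C'-C) + p1*(S'-S))) (-(2/j^2)*(H'-H)));
        [exact Cmu|exact Smu|exact Imu]].
    - intros y; simpl. unfold g. specialize (Hpos y); specialize (Hpos' y).
      replace ((m' y - m y) * (m' y - m y) / (m' y * m y)) with (-(m' y - m y) * (/ m' y - / m y)) by (field; lra).
      rewrite key. field. auto.
    - ring. }
  assert (HQ0 : 0 <= -(2/j^2)*(p1*((C'-C)*(C'-C) + (S'-S)*(S'-S)))).
  { apply (is_RInt_ge_0 g 0 1); [lra|exact HQ|]. intros x _; unfold g; cbv beta.
    specialize (Hpos x); specialize (Hpos' x). apply Rmult_le_pos; [apply (Rle_0_sqr (m' x - m x))|].
    left; apply Rinv_0_lt_compat; nra. }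
  assert (HQ1 : -(2/j^2)*(p1*((C'-C)*(C'-C) + (S'-S)*(S'-S))) <= 0).
  { assert (0 < 2/j^2) by (apply Rdiv_lt_0_compat; lra).
    assert (0 <= p1*((C'-C)*(C'-C) + (S'-S)*(S'-S))) by (apply Rmult_le_pos; [lra| apply Rplus_le_le_0_compat; apply Rle_0_sqr]). nra. }
  assert (HQe : is_RInt g 0 1 0) by (eapply RI_eqv; [exact HQ| lra]).
  set (T := (C'-C)*(C'-C) + (S'-S)*(S'-S)).
  set (h := fun y => (C'-C)*cos(2*PI*y) + (S'-S)*sin(2*PI*y)).
  destruct (ex_c (fun y => h y * h y * (m' y * m y))) as [B HB].
  { intros x; unfold h. repeat apply c_mult; auto; apply c_plus; apply c_mult; try apply c_cst; try apply c_cos; apply c_sin. }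
  simpl in B.
  assert (HT2 : is_RInt (fun y => (C'-C) * (cos(2*PI*y) * (m' y - m y)) + (S'-S) * (sin(2*PI*y) * (m' y - m y))) 0 1 T).
  { apply RI_plus; apply RI_scal; auto. }
  assert (Hlam : forall lam, 0 <= lam*lam*0 + (2*lam)*T + 1*B).
  { intros lam. apply (is_RInt_ge_0 (fun y => (lam*(m' y - m y) + h y * (m' y * m y))^2 / (m' y * m y)) 0 1); [lra| |].
    - eapply RI_ext; [|apply RI_lin3; [exact HQe|exact HT2|exact HB]].
      intros y; simpl. unfold g, h; cbv beta. specialize (Hpos y); specialize (Hpos' y). field. lra.
    - intros x _; cbv beta. specialize (Hpos x); specialize (Hpos' x).
      apply Rmult_le_pos; [apply pow2_ge_0|]. left; apply Rinv_0_lt_compat; nra. }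
  assert (HT0 : T = 0).
  { assert (0 <= T) by (unfold T; apply Rplus_le_le_0_compat; apply Rle_0_sqr).
    destruct (Req_dec T 0) as [|HTn]; auto. exfalso.
    specialize (Hlam (-(B+1)/(2*T))).
    replace (- (B + 1) / (2 * T) * (- (B + 1) / (2 * T)) * 0 + 2 * (- (B + 1) / (2 * T)) * T + 1 * B) with (-1) in Hlam by (field; auto).
    lra. }
  destruct (sq_sum0 (C'-C) (S'-S) HT0) as [EC ES].
  assert (EC' : C' = C) by lra. assert (ES' : S' = S) by lra. clear EC ES. rename EC' into EC. rename ES' into ES.
  destruct (ex_c (fun y => m' y * m y)) as [W HW].
  { intros x; apply c_mult; auto. }
  simpl in W.
  assert (HWp : 0 < W).
  { rewrite <- (is_RInt_unique (V:=R_CompleteNormedModule) _ _ _ _ HW).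
    apply RInt_gt_0; [lra| |].
    - intros x _; specialize (Hpos x); specialize (Hpos' x); nra.
    - intros x _; apply c_mult; auto. }
  assert (EH : H' = H).
  { assert (E0 : 0 = (-(2/j^2)*(H'-H)) * W).
    { apply (RI_uniq _ 0 1 _ _ Imu). eapply RI_ext; [|apply RI_scal; exact HW].
      intros y; simpl. specialize (Hpos y); specialize (Hpos' y).
      replace (m' y - m y) with (-(m' y * m y) * (/ m' y - / m y)) by (field; lra).
      rewrite key, EC, ES. field. auto. }
    assert (0 < 2/j^2) by (apply Rdiv_lt_0_compat; lra).
    assert (H' - H = 0); [|lra].
    symmetry in E0. apply Rmult_integral in E0. destruct E0 as [E0|E0]; [|lra].
    apply Rmult_integral in E0. destruct E0 as [E0|E0]; [lra|auto]. }
  split; auto.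
  intros x. specialize (key x). rewrite EC, ES, EH in key.
  assert (/ m' x = / m x) by lra.
  rewrite <- (Rinv_inv (m' x)), H0, Rinv_inv. auto.
Qed.

Lemma cos_per x : cos (2*PI*(x+1)) = cos (2*PI*x).
Proof. replace (2*PI*(x+1)) with (2*PI*x + 2*PI) by ring. rewrite cos_plus, cos_2PI, sin_2PI. ring. Qed.
Lemma sin_per x : sin (2*PI*(x+1)) = sin (2*PI*x).
Proof. replace (2*PI*(x+1)) with (2*PI*x + 2*PI) by ring. rewrite sin_plus, cos_2PI, sin_2PI. ring. Qed.

Lemma exist_part j p0 p1 q1 v0 v1 w1 (G V m : R -> R) r P D a1 b1 Hb :
  j <> 0 -> 0 <= p1 ->
  (forall z, G z = p0 + p1*cos(2*PI*z) + q1*sin(2*PI*z)) ->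
  (forall z, V z = v0 + v1*cos(2*PI*z) + w1*sin(2*PI*z)) ->
  1 <= r -> (1 - 1/r)*D = v1^2 + w1^2 -> P = p1 + j^2*r -> D = P^2 + q1^2 ->
  a1 = -(2*r*(v1*P + w1*q1))/D -> b1 = -(2*r*(w1*P - v1*q1))/D ->
  Hb = j^2*(2*r-1)/2 + v0 - p0 ->
  (forall x, m x = 1/(2*r-1 + a1*cos(2*PI*x) + b1*sin(2*PI*x))) ->
  solves_P 1 j V G m Hb.
Proof.
  intros Hj Hp1 HG HV Hr HE HP HD Ha1 Hb1 HHb Hm.
  assert (Hj2 : 0 < j^2) by (apply pow2_gt_0; auto).
  assert (HP0 : 0 < P) by (rewrite HP; nra).
  assert (HD0 : 0 < D) by (rewrite HD; nra).
  set (u := (v1*P + w1*q1)/D). set (v := (w1*P - v1*q1)/D).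
  assert (He2 : u^2+v^2 = 1 - 1/r).
  { transitivity ((v1^2+w1^2)/D).
    - unfold u, v. rewrite HD. field. rewrite <- HD. lra.
    - rewrite <- HE. field. split; lra. }
  assert (Hlt : u^2+v^2 < 1).
  { rewrite He2. assert (0 < 1/r) by (apply Rdiv_lt_0_compat; lra). lra. }
  assert (Hden : forall x, 2*r-1 + a1*cos(2*PI*x) + b1*sin(2*PI*x) = r * Dn u v x).
  { intros x. unfold Dn. rewrite He2, Ha1, Hb1. unfold u, v. field. split; lra. }
  assert (Hm2 : forall x, m x = (1-(u^2+v^2))/Dn u v x).
  { intros x. rewrite Hm, Hden, He2. pose proof (Dn_pos u v x Hlt). field. split; lra. }
  destruct (poisson_cs u v Hlt) as [HCc HSs]. pose proof (poisson1 u v Hlt) as HI.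
  assert (HI' : is_RInt m 0 1 1) by (eapply RI_ext; [|exact HI]; intros; rewrite Hm2; auto).
  assert (HC' : is_RInt (fun y => cos(2*PI*y) * m y) 0 1 u) by (eapply RI_ext; [|exact HCc]; intros; simpl; rewrite Hm2; auto).
  assert (HS' : is_RInt (fun y => sin(2*PI*y) * m y) 0 1 v) by (eapply RI_ext; [|exact HSs]; intros; simpl; rewrite Hm2; auto).
  assert (Hpos : forall x, 0 < m x).
  { intros x. rewrite Hm2. apply Rdiv_lt_0_compat; [lra| apply Dn_pos; auto]. }
  split; [split|split; [|split]].
  - intros x. apply continuity_pt_filterlim.
    apply (continuous_ext (fun y => (1-(u^2+v^2))/Dn u v y)). intros; rewrite Hm2; auto.
    apply c_div; [apply c_cst| apply c_Dn| pose proof (Dn_pos u v x Hlt); lra].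
  - intros x. rewrite !Hm2. unfold Dn. rewrite cos_per, sin_per. auto.
  - exact Hpos.
  - apply is_intT; auto.
  - intros x. apply is_intT. eapply RI_eqv. apply (conv_formula G p0 p1 q1 m 1 u v x HG HI' HC' HS').
    rewrite Rpower_1 by auto. rewrite HV, HHb.
    assert (Hnz : 2*r-1 + a1*cos(2*PI*x) + b1*sin(2*PI*x) <> 0).
    { rewrite Hden. pose proof (Dn_pos u v x Hlt). apply Rmult_integral_contrapositive; split; lra. }
    rewrite Hm. rewrite Ha1, Hb1 in *. unfold u, v. subst P. subst D.
    field. split; [lra|]. intro Hc. apply Hnz.
    match type of Hc with ?e = 0 => replace (2 * r - 1 + - (2 * r * (v1 * (p1 + j ^ 2 * r) + w1 * q1)) / ((p1 + j ^ 2 * r) ^ 2 + q1 ^ 2) * cos (2 * PI * x) + - (2 * r * (w1 * (p1 + j ^ 2 * r) - v1 * q1)) / ((p1 + j ^ 2 * r) ^ 2 + q1 ^ 2) * sin (2 * PI * x)) with (e / ((p1 + j ^ 2 * r) ^ 2 + q1 ^ 2)) by (field; lra) end.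
    rewrite Hc. unfold Rdiv. ring.
Qed.

Lemma fstrict J p1 q1 a b : 0 < J -> 0 <= p1 -> 1 <= a -> a < b ->
  (1 - 1/a)*((p1 + J*a)^2 + q1^2) < (1 - 1/b)*((p1 + J*b)^2 + q1^2).
Proof.
  intros HJ Hp Ha Hab.
  assert (H1 : (p1 + J*a)^2 < (p1 + J*b)^2).
  { assert (0 < p1 + J*a) by nra. assert (J*a < J*b) by nra. nra. }
  assert (H2 : 0 <= 1 - 1/a).
  { assert (/a <= /1) by (apply Rinv_le_contravar; lra). rewrite Rinv_1 in H. unfold Rdiv; rewrite Rmult_1_l. lra. }
  assert (H3 : 1 - 1/a <= 1 - 1/b).
  { assert (1/b <= 1/a); [|lra]. unfold Rdiv; rewrite !Rmult_1_l. apply Rinv_le_contravar; lra. }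
  assert (H4 : 0 < 1 - 1/b).
  { assert (/b < /1) by (apply Rinv_lt_contravar; lra). rewrite Rinv_1 in H. unfold Rdiv; rewrite Rmult_1_l. lra. }
  assert (H5 : 0 <= (p1 + J*a)^2 + q1^2) by (pose proof (pow2_ge_0 (p1+J*a)); pose proof (pow2_ge_0 q1); lra).
  apply Rle_lt_trans with ((1 - 1/b)*((p1 + J*a)^2 + q1^2)).
  - apply Rmult_le_compat_r; auto.
  - apply Rmult_lt_compat_l; auto. lra.
Qed.

Lemma r_exun j p1 q1 v1 w1 : j <> 0 -> 0 <= p1 ->
  exists! r, 1 <= r /\ (1 - 1/r)*((p1 + j^2*r)^2 + q1^2) = v1^2 + w1^2.
Proof.
  intros Hj Hp.
  assert (HJ : 0 < j^2) by (apply pow2_gt_0; auto).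
  set (J := j^2) in *. set (K := v1^2 + w1^2).
  assert (HK : 0 <= K) by (unfold K; pose proof (pow2_ge_0 v1); pose proof (pow2_ge_0 w1); lra).
  set (f := fun r => (r-1)*((p1 + J*r)^2 + q1^2) - r*K).
  set (R0 := 1 + K/(J*J)).
  assert (HR0 : 1 <= R0) by (unfold R0; assert (0 <= K/(J*J)) by (apply Rdiv_le_0_compat; nra); lra).
  assert (Hf1 : f 1 = -K) by (unfold f; ring).
  assert (HfR : 0 <= f R0).
  { unfold f. assert (A : (J*R0)^2 <= (p1 + J*R0)^2 + q1^2).
    { pose proof (pow2_ge_0 q1). assert (0 <= J*R0) by nra. nra. }
    replace (R0 - 1) with (K/(J*J)) by (unfold R0; ring).
    apply Rle_trans with (K/(J*J)*(J*R0)^2 - R0*K).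
    - replace (K/(J*J)*(J*R0)^2 - R0*K) with (K*R0*(R0-1)) by (field; lra).
      apply Rmult_le_pos; [apply Rmult_le_pos|]; lra.
    - assert (0 <= K/(J*J)) by (apply Rdiv_le_0_compat; nra). nra. }
  assert (Hc : continuity f).
  { intros x. apply continuity_pt_filterlim.
    apply (ex_derive_continuous (K:=R_AbsRing) (V:=R_NormedModule)). unfold f. auto_derive. auto. }
  destruct (IVT_cor f 1 R0 Hc HR0) as [z [Hz Hfz]].
  { rewrite Hf1. nra. }
  assert (Ez : (1 - 1/z)*((p1 + J*z)^2 + q1^2) = K).
  { unfold f in Hfz. apply (Rmult_eq_reg_l z); [|lra].
    replace (z * ((1 - 1/z)*((p1 + J*z)^2 + q1^2))) with ((z-1)*((p1 + J*z)^2 + q1^2)) by (field; lra).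
    lra. }
  exists z. split; [split; [lra|exact Ez]|].
  intros r' [Hr' Er'].
  destruct (Rtotal_order z r') as [Hlt|[Heq|Hgt]]; auto.
  - pose proof (fstrict J p1 q1 z r' HJ Hp ltac:(lra) Hlt). lra.
  - pose proof (fstrict J p1 q1 r' z HJ Hp Hr' Hgt). lra.
Qed.

Theorem theorem1p3 (j p0 p1 q1 v0 v1 w1 : R) :
  j <> 0 -> 0 < p0 -> 0 <= p1 ->
  let G := fun x => p0 + p1 * cos (2 * PI * x) + q1 * sin (2 * PI * x) in
  let V := fun x => v0 + v1 * cos (2 * PI * x) + w1 * sin (2 * PI * x) in
  let E := fun r => (1 - 1 / r) * ((p1 + j ^ 2 * r) ^ 2 + q1 ^ 2) = v1 ^ 2 + w1 ^ 2 in
  (exists! r, 1 <= r /\ E r) /\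
  (forall r, 1 <= r -> E r ->
     let D := (p1 + j ^ 2 * r) ^ 2 + q1 ^ 2 in
     let a0 := 2 * r - 1 in
     let Hbar := j ^ 2 * (2 * r - 1) / 2 + v0 - p0 in
     let a1 := - (2 * r * (v1 * (p1 + j ^ 2 * r) + w1 * q1)) / D in
     let b1 := - (2 * r * (w1 * (p1 + j ^ 2 * r) - v1 * q1)) / D in
     let m := fun x => 1 / (a0 + a1 * cos (2 * PI * x) + b1 * sin (2 * PI * x)) in
     solves_P 1 j V G m Hbar /\
     (forall (m' : R -> R) (H' : R), solves_P 1 j V G m' H' ->
        (forall x, m' x = m x) /\ H' = Hbar)).
Proof.
  intros Hj Hp0 Hp1 G V E. split.
  - exact (r_exun j p1 q1 v1 w1 Hj Hp1).
  - intros r Hr HE D a0 Hbar a1 b1 m.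
    assert (Hs : solves_P 1 j V G m Hbar).
    { exact (exist_part j p0 p1 q1 v0 v1 w1 G V m r (p1 + j^2*r) D a1 b1 Hbar Hj Hp1
        (fun z => eq_refl) (fun z => eq_refl) Hr HE eq_refl eq_refl eq_refl eq_refl eq_refl
        (fun x => eq_refl)). }
    split; auto.
    intros m' H' Hs'.
    exact (uniq_gen j p0 p1 q1 G V m Hbar m' H' Hj Hp1 (fun z => eq_refl) Hs Hs').
Qed.
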